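(* Fix two positive integers $b$ and $k$. Then the proportion of points $(r,s)\in\mathbb{N}\times\mathbb{N}$ with $\gcd_b(r,s)=k$ is $\dfrac{1}{k^{b+1}\zeta(b+1)}$; that is, \[ \lim_{N\to\infty}\frac{|\{(r,s): 0<r,s\le N,\ \gcd_b(r,s)=k\}|}{N^2}=\frac{1}{k^{b+1}\zeta(b+1)}, \] where $\zeta$ is the Riemann zeta function.
   Context: For $b\in\mathbb{N}$ and $r,s\in\mathbb{N}$, $\gcd_b(r,s)=\max\{k\in\mathbb{N} : k\mid r \text{ and } k^b\mid s\}$. *)

(* Defs.v *)
From Stdlib Require Import Reals Lra Lia Arith List.
From Coquelicot Require Import Coquelicot.
Open Scope R_scope.

Definition divb (d n : nat) : bool :=
  match d with
  | O => Nat.eqb n 0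
  | S _ => Nat.eqb (n mod d) 0
  end.

(* gcd_b(r,s) = max { k in N : k | r and k^b | s }.
   For r > 0 every divisor of r lies in 1..r, so the maximum is the largest
   k in 1..r with k | r and k^b | s (k = 1 always qualifies). *)
Definition gcd_b (b r s : nat) : nat :=
  fold_left Nat.max
    (filter (fun k => andb (divb k r) (divb (k ^ b) s)) (seq 1 r)) 0%nat.

Definition count_gcd_b (b k N : nat) : nat :=
  length (filter (fun p : nat * nat => Nat.eqb (gcd_b b (fst p) (snd p)) k)
            (list_prod (seq 1 N) (seq 1 N))).

Definition zeta (s : R) : R := Series (fun n : nat => / Rpower (INR (S n)) s).

(* Main.v *)
Require Import Defs.
Set Warnings "-notation-overridden,-ambiguous-paths,-deprecated".
From Stdlib Require Import Reals Lra Lia.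
From Coquelicot Require Import Coquelicot.
From HB Require Import structures.
From mathcomp Require Import ssreflect ssrfun ssrbool eqtype ssrnat seq div prime bigop path.
Set Warnings "-notation-overridden,-ambiguous-paths,-deprecated".
Set Implicit Arguments. Open Scope nat_scope. Unset Strict Implicit. Unset Printing Implicit Defensive.

Lemma powE (m n : nat) : Nat.pow m n = expn m n.
Proof. elim: n => [|n IH] //=. by rewrite expnS IH. Qed.

Lemma divbE d n : divb d n = (d %| n).
Proof.
case: d => [|d] /=.
  by rewrite dvd0n; case: n.
apply/idP/idP.
  move/PeanoNat.Nat.eqb_eq/(PeanoNat.Nat.mod_divide _ _ (PeanoNat.Nat.neq_succ_0 d)) => [c ->].
  by apply/dvdnP; exists c.
move/dvdnP=> [c ->]; apply/PeanoNat.Nat.eqb_eq.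
apply/(PeanoNat.Nat.mod_divide _ _ (PeanoNat.Nat.neq_succ_0 d)); by exists c.
Qed.

Lemma fold_max_spec (l : list nat) a :
  (List.fold_left Nat.max l a = a \/ List.In (List.fold_left Nat.max l a) l) /\
  (a <= List.fold_left Nat.max l a)%coq_nat /\
  (forall x, List.In x l -> (x <= List.fold_left Nat.max l a)%coq_nat).
Proof.
elim: l a => [|x l IH] a /=; first by split; [left|split; [lia|]].
have [[H1|H1] [H2 H3]] := IH (Nat.max a x).
- split; [|split].
  + rewrite H1. case: (PeanoNat.Nat.max_spec a x) => [[_ ->]|[_ ->]]; [right; left|left]; done.
  + lia.
  + move=> y [<-|Hy]; [lia|]. exact: H3.
- split; [right; right; exact H1|split; [lia|]].
  move=> y [<-|Hy]; [lia|]. exact: H3.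
Qed.

Section GB.
Variables (b r s : nat).
Hypothesis (hr : 0 < r).

Definition Pb k := (k %| r) && (k ^ b %| s).

Lemma gcd_b_spec :
  Pb (gcd_b b r s) /\ 0 < gcd_b b r s /\ (forall k, 0 < k -> Pb k -> k <= gcd_b b r s).
Proof.
rewrite /gcd_b.
set l := List.filter _ _.
have memP x : List.In x l <-> (List.In x (List.seq 1 r) /\ Pb x).
  rewrite /l List.filter_In /Pb divbE powE divbE; split => -[h1 h2]; split => //.
have mseq x : List.In x (List.seq 1 r) <-> (0 < x <= r).
  rewrite List.in_seq; split => [[h1 h2]|/andP[/ltP h1 /leP h2]].
    by apply/andP; split; [apply/ltP|apply/leP]; lia.
  split; lia.
have P1 : Pb 1 by rewrite /Pb dvd1n exp1n dvd1n.
have in1 : List.In 1 l by apply/memP; split => //; apply/mseq; rewrite /= hr.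
have [[H1|H1] [_ H3]] := fold_max_spec l 0.
  by have := H3 _ in1; rewrite H1; lia.
have [/mseq /andP [g0 _] Pg] := (memP _).1 H1.
split => //; split => // k k0 Pk.
apply/leP; apply: H3; apply/memP; split => //; apply/mseq; rewrite k0 /=.
by move: Pk => /andP [/dvdn_leq ->].
Qed.

Lemma gcd_b_dvd m : 0 < s -> (m %| gcd_b b r s) = (m %| r) && (m ^ b %| s).
Proof.
move=> s0.
have [/andP [gr gs] [g0 gmax]] := gcd_b_spec.
set g := gcd_b b r s in gr gs g0 gmax *.
apply/idP/idP.
  move=> mg; rewrite (dvdn_trans mg gr) /=.
  exact: dvdn_trans (dvdn_exp2r b mg) gs.
move=> /andP [mr ms].
have m0 : 0 < m by apply: dvdn_gt0 hr mr.
set d := gcdn m g.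
have d0 : 0 < d by rewrite gcdn_gt0 m0.
have [m' em] : exists m', m = m' * d by apply/dvdnP; exact: dvdn_gcdl.
have [g' eg] : exists g', g = g' * d by apply/dvdnP; exact: dvdn_gcdr.
have cop : coprime m' g'.
  rewrite /coprime -(eqn_pmul2r d0) mul1n.
  by rewrite muln_gcdl -em -eg.
have m'0 : 0 < m' by move: m0; rewrite em muln_gt0 => /andP[].
have g'0 : 0 < g' by move: g0; rewrite eg muln_gt0 => /andP[].
have el : lcmn m g = m' * g' * d.
  apply/eqP; rewrite -(eqn_pmul2r d0) muln_lcm_gcd -/d {1}em {1}eg.
  by rewrite mulnAC !mulnA.
have lr : m' * g' * d %| r by rewrite -el dvdn_lcm mr gr.
have ls : (m' * g' * d) ^ b %| s.
  have [u eu] : exists u, s = u * d ^ b.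
    by apply/dvdnP; apply: dvdn_trans (dvdn_exp2r b (dvdn_gcdl m g)) ms.
  have db0 : 0 < d ^ b by rewrite expn_gt0 d0.
  rewrite !expnMn eu dvdn_pmul2r // Gauss_dvd; last exact: coprimeXr (coprimeXl _ cop).
  apply/andP; split.
    by rewrite -(dvdn_pmul2r db0) -expnMn -em -eu.
  by rewrite -(dvdn_pmul2r db0) -expnMn -eg -eu.
have lg : m' * g' * d <= g by apply: gmax; [rewrite !muln_gt0 m'0 g'0 d0|apply/andP].
have gl : g %| m' * g' * d by rewrite eg -mulnA dvdn_mull.
have eq : m' * g' * d = g.
  apply/eqP; rewrite eqn_leq lg /=; apply: dvdn_leq gl; by rewrite !muln_gt0 m'0 g'0 d0.
by rewrite -eq em mulnAC dvdn_mulr.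
Qed.

Lemma gcd_b_le : gcd_b b r s <= r.
Proof. have [/andP [gr _] _] := gcd_b_spec. exact: dvdn_leq hr gr. Qed.
Lemma gcd_b_gt0 : 0 < gcd_b b r s.
Proof. by have [_ []] := gcd_b_spec. Qed.
End GB.

Lemma Rplus_assoc' : associative Rplus.
Proof. by move=> x y z; rewrite Rplus_assoc. Qed.
Lemma Rmult_assoc' : associative Rmult.
Proof. by move=> x y z; rewrite Rmult_assoc. Qed.
HB.instance Definition _ := Monoid.isComLaw.Build R 0%R Rplus Rplus_assoc' Rplus_comm Rplus_0_l.
HB.instance Definition _ := Monoid.isComLaw.Build R 1%R Rmult Rmult_assoc' Rmult_comm Rmult_1_l.
HB.instance Definition _ := Monoid.isMulLaw.Build R 0%R Rmult Rmult_0_l Rmult_0_r.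
HB.instance Definition _ := Monoid.isAddLaw.Build R Rmult Rplus Rmult_plus_distr_r Rmult_plus_distr_l.

Definition muR (n : nat) : R :=
  \big[Rmult/1%R]_(p <- primes n) (if logn p n == 1 then (-1)%R else 0%R).

Lemma muR1 : muR 1 = 1%R.
Proof. by rewrite /muR big_nil. Qed.

Lemma muR_bound n : (Rabs (muR n) <= 1)%R.
Proof.
rewrite /muR; apply: (big_ind (fun x => Rabs x <= 1)%R).
- rewrite Rabs_R1; lra.
- move=> x y hx hy; rewrite Rabs_mult.
  have := Rabs_pos x; have := Rabs_pos y; nra.
- move=> p _; case: ifP => _; rewrite ?Rabs_Ropp ?Rabs_R1 ?Rabs_R0; lra.
Qed.

Lemma muR_pe p e : prime p -> 0 < e -> ~~ (p %| e) -> muR (p * e) = (- muR e)%R.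
Proof.
move=> pp e0 npe.
have p0 : 0 < p by apply: prime_gt0.
have pe : perm_eq (primes (p * e)) (p :: primes e).
  apply: uniq_perm; first exact: primes_uniq.
    by rewrite /= primes_uniq mem_primes (negbTE npe) !andbF.
  by move=> q; rewrite primesM // primes_prime // !in_cons in_nil orbF.
rewrite /muR (perm_big _ pe) big_cons.
rewrite lognM // logn_prime // eqxx.
have -> : logn p e = 0 by apply/eqP; rewrite -leqn0 leqNgt logn_gt0 mem_primes (negbTE npe) !andbF.
rewrite /= Ropp_mult_distr_l_reverse Rmult_1_l; congr (- _)%R.
apply: eq_big_seq => q qe.
rewrite lognM // logn_prime //.
have -> : (q == p) = false.
  by apply/negbTE; apply: contraNneq npe => <-; move: qe; rewrite mem_primes => /and3P[].
by rewrite add0n.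
Qed.

Lemma muR_pe0 p e : prime p -> 0 < e -> p %| e -> muR (p * e) = 0%R.
Proof.
move=> pp e0 pe.
have p0 : 0 < p by apply: prime_gt0.
have pin : p \in primes (p * e) by rewrite mem_primes pp muln_gt0 p0 e0 dvdn_mulr.
rewrite /muR (big_rem _ pin) /=.
rewrite lognM // logn_prime // eqxx.
have : 0 < logn p e by rewrite logn_gt0 mem_primes pp e0 pe.
by case: (logn p e) => // k _; rewrite Rmult_0_l.
Qed.

Lemma sumRN (I : Type) (r : seq I) (P : pred I) (F : I -> R) :
  \big[Rplus/0%R]_(i <- r | P i) (- F i)%R = (- \big[Rplus/0%R]_(i <- r | P i) F i)%R.
Proof.
symmetry; apply: (big_morph Ropp); [move=> x y; lra | lra].
Qed.

Lemma mu_divisors n : 0 < n ->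
  \big[Rplus/0%R]_(d <- divisors n) muR d = (if n == 1%N then 1%R else 0%R).
Proof.
move=> n0; case: (ltngtP n 1) => [|n1|->]; first by rewrite ltnNge n0.
  2: by rewrite /= big_cons big_nil muR1 Rplus_0_r.
have pp := pdiv_prime n1; set p := pdiv n in pp.
have p0 : 0 < p by apply: prime_gt0.
have [n' en] : exists n', n = p * n'.
  by exists (n %/ p); rewrite mulnC divnK // pdiv_dvd.
have n'0 : 0 < n' by move: n0; rewrite en muln_gt0 => /andP[].
rewrite (bigID (fun d => p %| d)) /=.
have E1 : \big[Rplus/0%R]_(d <- divisors n | p %| d) muR d
        = \big[Rplus/0%R]_(e <- divisors n') muR (p * e).
  rewrite -big_filter -(big_map (muln p) xpredT).
  apply: perm_big; apply: uniq_perm.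
  - by rewrite filter_uniq // divisors_uniq.
  - rewrite map_inj_uniq ?divisors_uniq //; move=> u v /eqP; rewrite eqn_pmul2l // => /eqP. by [].
  - move=> x; rewrite mem_filter -dvdn_divisors //; apply/andP/mapP.
      move=> [px xn]; exists (x %/ p); last by rewrite mulnC divnK.
      rewrite -dvdn_divisors // -(dvdn_pmul2l p0) -en mulnC divnK //.
    move=> [e]; rewrite -dvdn_divisors // => en' ->; split; first exact: dvdn_mulr.
    by rewrite en dvdn_pmul2l.
have E2 : \big[Rplus/0%R]_(d <- divisors n | ~~ (p %| d)) muR d
        = \big[Rplus/0%R]_(e <- divisors n' | ~~ (p %| e)) muR e.
  rewrite -big_filter -[RHS]big_filter.
  apply: perm_big; apply: uniq_perm; rewrite ?filter_uniq ?divisors_uniq //.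
  move=> x; rewrite !mem_filter -!dvdn_divisors //; case px: (p %| x) => //=.
  rewrite en Gauss_dvdr // coprime_sym prime_coprime //; by rewrite px.
rewrite E1 E2 (bigID (fun e => p %| e)) /=.
rewrite big1_seq; last first.
  move=> x; rewrite /= => /andP [px xd]; apply: muR_pe0 => //.
  by move: xd; rewrite -dvdn_divisors // => /dvdn_gt0; apply.
have -> : \big[Rplus/0%R]_(e <- divisors n' | ~~ (p %| e)) muR (p * e)
         = \big[Rplus/0%R]_(e <- divisors n' | ~~ (p %| e)) (- muR e)%R.
  rewrite big_seq_cond [RHS]big_seq_cond; apply: eq_bigr.
  move=> x /andP [xd px]; apply: muR_pe => //.
  by move: xd; rewrite -dvdn_divisors // => /dvdn_gt0; apply.
rewrite sumRN; lra.
Qed.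

Lemma mu_range N n : 0 < n <= N ->
  \big[Rplus/0%R]_(j <- iota 1 N | j %| n) muR j = (if n == 1%N then 1%R else 0%R).
Proof.
move=> /andP [n0 nN]; rewrite -big_filter -(mu_divisors n0).
apply: perm_big; apply: uniq_perm; rewrite ?filter_uniq ?iota_uniq ?divisors_uniq //.
move=> x; rewrite mem_filter mem_iota -dvdn_divisors //.
case xn: (x %| n); rewrite ?andbF //= add1n ltnS.
by rewrite (dvdn_gt0 n0 xn) (leq_trans (dvdn_leq n0 xn) nN).
Qed.

Definition ind (c : bool) : R := if c then 1%R else 0%R.

Lemma sum_ind (T : Type) (l : seq T) (P : pred T) :
  \big[Rplus/0%R]_(x <- l) ind (P x) = INR (count P l).
Proof.
elim: l => [|x l IH]; first by rewrite big_nil.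
have -> : count P (x :: l) = P x + count P l by [].
rewrite big_cons IH /ind; case: (P x).
  by rewrite add1n S_INR Rplus_comm.
by rewrite add0n Rplus_0_l.
Qed.

Lemma count_mult N m : 0 < m -> count (fun r => m %| r) (iota 1 N) = N %/ m.
Proof.
move=> m0; elim: N => [|N IH]; first by rewrite div0n.
by rewrite -[N.+1]addn1 iotaD count_cat IH /= add1n addn1 divnS // addn0 addnC.
Qed.

Lemma sum_mult N m : 0 < m ->
  \big[Rplus/0%R]_(r <- iota 1 N) ind (m %| r) = INR (N %/ m).
Proof. by move=> m0; rewrite sum_ind count_mult. Qed.

Lemma ind_mu N k g : 0 < k -> 0 < g <= N ->
  \big[Rplus/0%R]_(j <- iota 1 N) (muR j * ind (k * j %| g))%R = ind (g == k).
Proof.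
move=> k0 /andP [g0 gN].
have -> : \big[Rplus/0%R]_(j <- iota 1 N) (muR j * ind (k * j %| g))%R
        = \big[Rplus/0%R]_(j <- iota 1 N | k * j %| g) muR j.
  rewrite [RHS]big_mkcond; apply: eq_bigr => j _; rewrite /ind; case: ifP => _; lra.
case kg: (k %| g).
  have [h eh] : exists h, g = h * k by apply/dvdnP.
  have h0 : 0 < h by move: g0; rewrite eh muln_gt0 => /andP[].
  rewrite (eq_bigl (fun j => j %| h)); last by move=> j; rewrite eh [h * k]mulnC dvdn_pmul2l.
  rewrite mu_range; last by rewrite h0 /= (leq_trans _ gN) // eh leq_pmulr.
  rewrite /ind eh -{2}(mul1n k) eqn_pmul2r //.
rewrite big_pred0; last first.
  by move=> j; apply/negbTE; apply: contraFN kg; apply: dvdn_trans; apply: dvdn_mulr.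
rewrite /ind; case: eqP => // egk; by rewrite egk dvdnn in kg.
Qed.

Lemma appE (T : Type) (a b : seq T) : List.app a b = a ++ b.
Proof. by elim: a => //= x a ->. Qed.
Lemma mapE (T U : Type) (f : T -> U) (a : seq T) : List.map f a = map f a.
Proof. by elim: a => //= x a ->. Qed.
Lemma seqE m n : List.seq m n = iota m n.
Proof. by elim: n m => //= n IH m; rewrite IH. Qed.
Lemma length_filter (T : Type) (f : T -> bool) (l : seq T) :
  length (List.filter f l) = count f l.
Proof. elim: l => //= x l IH; case: (f x) => /=; rewrite IH //. Qed.

Lemma big_prod (F : nat * nat -> R) (l1 l2 : seq nat) :
  \big[Rplus/0%R]_(p <- List.list_prod l1 l2) F p =
  \big[Rplus/0%R]_(r <- l1) \big[Rplus/0%R]_(s <- l2) F (r, s).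
Proof.
elim: l1 => [|x l1 IH]; first by rewrite !big_nil.
by rewrite /= appE big_cat mapE big_map IH big_cons.
Qed.

Definition CR b k N := \big[Rplus/0%R]_(r <- iota 1 N) \big[Rplus/0%R]_(s <- iota 1 N)
   ind (gcd_b b r s == k).

Lemma count_CR b k N : INR (count_gcd_b b k N) = CR b k N.
Proof.
rewrite /count_gcd_b length_filter -sum_ind big_prod /CR !seqE.
apply: eq_bigr => r _; apply: eq_bigr => s _ /=.
by rewrite /ind; case: PeanoNat.Nat.eqb_spec => [->|/eqP/negbTE ->]; rewrite ?eqxx.
Qed.

Lemma CR_mu b k N : 0 < k ->
  CR b k N = \big[Rplus/0%R]_(j <- iota 1 N)
     (muR j * (INR (N %/ (k * j)) * INR (N %/ (k * j) ^ b)))%R.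
Proof.
move=> k0.
have H : forall r s, r \in iota 1 N -> s \in iota 1 N ->
    ind (gcd_b b r s == k) = \big[Rplus/0%R]_(j <- iota 1 N)
        (muR j * (ind (k * j %| r) * ind ((k * j) ^ b %| s)))%R.
  move=> r s; rewrite !mem_iota !add1n !ltnS => /andP [r0 rN] /andP [s0 sN].
  rewrite -(ind_mu (k := k) (N := N)) //; last by rewrite gcd_b_gt0 // (leq_trans (gcd_b_le _ _ _)).
  apply: eq_bigr => j _; rewrite gcd_b_dvd //; congr (_ * _)%R.
  by rewrite /ind; case: (k * j %| r); case: ((k * j) ^ b %| s) => /=; lra.
rewrite /CR (eq_big_seq (fun r => \big[Rplus/0%R]_(s <- iota 1 N) \big[Rplus/0%R]_(j <- iota 1 N)
        (muR j * (ind (k * j %| r) * ind ((k * j) ^ b %| s)))%R)); last first.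
  by move=> r rN; apply: eq_big_seq => s sN; exact: H.
under eq_bigr => r _ do rewrite exchange_big.
rewrite exchange_big; apply: eq_big_seq => j; rewrite mem_iota => /andP [j0 _].
have kj0 : 0 < k * j by rewrite muln_gt0 k0.
have kjb0 : 0 < (k * j) ^ b by rewrite expn_gt0 kj0.
rewrite -(sum_mult N kj0) -(sum_mult N kjb0).
rewrite big_distrl big_distrr; apply: eq_bigr => r _ /=.
by rewrite big_distrr big_distrr.
Qed.

Lemma big_Rle (I : Type) (r : seq I) (P : pred I) (F G : I -> R) :
  (forall i, P i -> F i <= G i)%R ->
  (\big[Rplus/0%R]_(i <- r | P i) F i <= \big[Rplus/0%R]_(i <- r | P i) G i)%R.
Proof.
move=> H; apply: (big_ind2 (fun x y => x <= y)%R); [lra| move=> ????; lra | exact: H].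
Qed.

Lemma ind_ge0 c : (0 <= ind c)%R.
Proof. rewrite /ind; case: c; lra. Qed.

Lemma CR_ge0 b k N : (0 <= CR b k N)%R.
Proof.
rewrite /CR; apply: (big_ind (fun x => 0 <= x)%R); [lra | move=> ??; lra|] => r _.
apply: (big_ind (fun x => 0 <= x)%R); [lra | move=> ??; lra|] => s _; exact: ind_ge0.
Qed.

Lemma CR_le b k N : 0 < k ->
  (CR b k N <= INR (N %/ k) * INR (N %/ k ^ b))%R.
Proof.
move=> k0; have kb0 : 0 < k ^ b by rewrite expn_gt0 k0.
rewrite -(sum_mult N k0) -(sum_mult N kb0) big_distrl /CR big_seq [X in (_ <= X)%R]big_seq.
apply: big_Rle => r rN; rewrite big_distrr big_seq [X in (_ <= X)%R]big_seq; apply: big_Rle => s sN /=.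
move: rN sN; rewrite !mem_iota !add1n !ltnS => /andP [r0 _] /andP [s0 _].
rewrite {1}/ind; case: eqP => [eg|_].
  have : k %| gcd_b b r s by rewrite eg. rewrite gcd_b_dvd // => /andP [kr ks].
  by rewrite /ind kr ks; lra.
have := ind_ge0 (k %| r); have := ind_ge0 (k ^ b %| s); nra.
Qed.

Lemma CR_total b N :
  \big[Rplus/0%R]_(k <- iota 1 N) CR b k N = (INR N * INR N)%R.
Proof.
rewrite /CR exchange_big /=.
rewrite (eq_big_seq (fun r => \big[Rplus/0%R]_(s <- iota 1 N) 1%R)); last first.
  move=> r; rewrite mem_iota add1n ltnS => /andP [r0 rN].
  rewrite exchange_big; apply: eq_bigr => s _.
  rewrite sum_ind (eq_count (a2 := pred1 (gcd_b b r s))); last by move=> x; rewrite /= eq_sym.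
  rewrite count_uniq_mem ?iota_uniq // mem_iota add1n ltnS gcd_b_gt0 //.
  by rewrite (leq_trans (gcd_b_le _ _ _)).
have E : \big[Rplus/0%R]_(s <- iota 1 N) 1%R = INR N.
  have -> : INR N = INR (count predT (iota 1 N)) by rewrite count_predT size_iota.
  by rewrite -sum_ind.
by rewrite E -{2}E big_distrl /=; apply: eq_bigr => r _; rewrite Rmult_1_l.
Qed.

Open Scope R_scope.

Definition PS (a : nat -> R) K := \big[Rplus/0]_(n <- iota 0 K) a n.

Lemma PS_S a K : PS a K.+1 = PS a K + a K.
Proof. by rewrite /PS -addn1 iotaD big_cat /= big_cons big_nil Rplus_0_r. Qed.

Lemma sum_n_PS a K : sum_n a K = PS a K.+1.
Proof.
elim: K => [|K IH]; first by rewrite sum_O /PS /= big_cons big_nil Rplus_0_r.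
by rewrite sum_Sn IH (PS_S a K.+1).
Qed.

Lemma PS_lim a : ex_series a -> is_lim_seq (PS a) (Series a).
Proof.
move=> ha; apply/is_lim_seq_incr_1.
apply: (is_lim_seq_ext (sum_n a)); first by move=> n; rewrite sum_n_PS.
exact: (Series_correct _ ha).
Qed.

Lemma PS_split a J K : (J <= K)%N ->
  PS a K = PS a J + \big[Rplus/0]_(n <- iota J (K - J)) a n.
Proof. by move=> JK; rewrite /PS -{1}(subnKC JK) iotaD big_cat. Qed.

Lemma big_Rabs (I : Type) (r : seq I) (F : I -> R) :
  Rabs (\big[Rplus/0]_(i <- r) F i) <= \big[Rplus/0]_(i <- r) Rabs (F i).
Proof.
apply: (big_ind2 (fun x y => Rabs x <= y)); first by rewrite Rabs_R0; lra.
  move=> x1 y1 x2 y2 h1 h2; have := Rabs_triang x1 x2; lra.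
by move=> i _; lra.
Qed.

Lemma big_ge0 (I : Type) (r : seq I) (F : I -> R) :
  (forall i, 0 <= F i) -> 0 <= \big[Rplus/0]_(i <- r) F i.
Proof. move=> H; apply: (big_ind (fun x => 0 <= x)); [lra| move=> ??; lra| move=> i _; exact: H]. Qed.

Lemma PS_mono M J K : (forall n, 0 <= M n) -> (J <= K)%N -> PS M J <= PS M K.
Proof. move=> M0 JK; rewrite (PS_split _ JK); have := big_ge0 (iota J (K - J)) M0; lra. Qed.

Lemma PS_le_Series M K : (forall n, 0 <= M n) -> ex_series M -> PS M K <= Series M.
Proof.
move=> M0 hM.
have := is_lim_seq_le_loc (fun _ => PS M K) (PS M) (PS M K) (Series M).
apply => //; [exists K => n Kn; apply: PS_mono => //; exact/leP | exact: is_lim_seq_const | exact: PS_lim].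
Qed.

Lemma tannery (f : nat -> nat -> R) (a M : nat -> R) :
  (forall n, is_lim_seq (fun N => f N n) (a n)) ->
  (forall N n, Rabs (f N n) <= M n) ->
  ex_series M ->
  is_lim_seq (fun N => PS (f N) N) (Series a).
Proof.
move=> hf hM exM.
have M0 : forall n, 0 <= M n by move=> n; have := hM O n; have := Rabs_pos (f O n); lra.
have aM : forall n, Rabs (a n) <= M n.
  move=> n; have := is_lim_seq_le (fun N => Rabs (f N n)) (fun _ => M n) (Rabs (a n)) (M n).
  apply => //; [exact: (is_lim_seq_abs _ _ (hf n)) | exact: is_lim_seq_const].
have exa : ex_series a by apply: (ex_series_le a M) => // n; exact: aM.
set T := fun J => Series M - PS M J.
have hT : is_lim_seq T 0.
  have := is_lim_seq_minus' (fun _ => Series M) (PS M) (Series M) (Series M) (is_lim_seq_const _) (PS_lim exM).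
  by rewrite Rminus_eq_0.
have tailM : forall J K, (J <= K)%N -> \big[Rplus/0]_(n <- iota J (K - J)) M n <= T J.
  move=> J K JK; have := PS_le_Series K M0 exM; rewrite (PS_split _ JK) /T; lra.
have tailA : forall J, Rabs (Series a - PS a J) <= T J.
  move=> J.
  have := is_lim_seq_le_loc (fun K => Rabs (PS a K - PS a J)) (fun _ => T J) (Rabs (Series a - PS a J)) (T J).
  apply.
  - exists J => K /leP JK; rewrite (PS_split _ JK) Rplus_comm /Rminus Rplus_assoc Rplus_opp_r Rplus_0_r.
    apply: Rle_trans (big_Rabs _ _) _; apply: Rle_trans (tailM J K JK).
    rewrite big_seq [X in _ <= X]big_seq; apply: big_Rle => n _; exact: aM.
  - apply: (is_lim_seq_abs (fun K => PS a K - PS a J) (Series a - PS a J)).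
    exact: is_lim_seq_minus' (PS_lim exa) (is_lim_seq_const _).
  - exact: is_lim_seq_const.
have fin : forall (l : seq nat), is_lim_seq (fun N => \big[Rplus/0]_(n <- l) f N n)
                                   (\big[Rplus/0]_(n <- l) a n).
  elim=> [|n l IH]; first by apply: (is_lim_seq_ext (fun _ => 0)); [move=> N; rewrite big_nil| rewrite big_nil; exact: is_lim_seq_const].
  apply: (is_lim_seq_ext (fun N => f N n + \big[Rplus/0]_(i <- l) f N i)).
    by move=> N; rewrite big_cons.
  by rewrite big_cons; apply: is_lim_seq_plus'.
apply/is_lim_seq_spec => eps.
have e3 : 0 < eps / 3 by have := cond_pos eps; lra.
have [J HJ] := (proj2 (is_lim_seq_spec _ _) hT (mkposreal _ e3)).
have {}HJ := HJ J (le_n J); rewrite /= Rminus_0_r in HJ.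
have TJ0 : 0 <= T J by have := PS_le_Series J M0 exM; rewrite /T; lra.
rewrite Rabs_pos_eq // in HJ.
have [N0 HN0] := (proj2 (is_lim_seq_spec _ _) (fin (iota 0 J)) (mkposreal _ e3)).
exists (maxn J N0) => N /leP; rewrite geq_max => /andP [JN N0N].
have := HN0 N (elimT leP N0N); rewrite /= => h1.
have := tailA J => h2.
have h3 : Rabs (\big[Rplus/0]_(n <- iota J (N - J)) f N n) <= T J.
  apply: Rle_trans (big_Rabs _ _) _; apply: Rle_trans (tailM J N JN).
  apply: big_Rle => n _; exact: hM.
rewrite (PS_split _ JN).
have := Rabs_triang (PS (f N) J - PS a J) (\big[Rplus/0]_(n <- iota J (N - J)) f N n).
have := Rabs_triang ((PS (f N) J - PS a J) + \big[Rplus/0]_(n <- iota J (N - J)) f N n) (PS a J - Series a).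
rewrite Rabs_minus_sym in h2.
have -> : PS (f N) J + \big[Rplus/0]_(n <- iota J (N - J)) f N n - Series a =
   (PS (f N) J - PS a J) + \big[Rplus/0]_(n <- iota J (N - J)) f N n + (PS a J - Series a) by ring.
move=> t1 t2; rewrite /PS /= in h1 h2 HJ t1 t2 *; lra.
Qed.

Lemma INR_muln m n : INR (m * n) = INR m * INR n.
Proof. by rewrite mulnE mult_INR. Qed.
Lemma INR_leq m n : (m <= n)%N -> INR m <= INR n.
Proof. by move/leP; apply: le_INR. Qed.
Lemma INR_expn m n : INR (m ^ n) = INR m ^ n.
Proof. by rewrite -powE pow_INR. Qed.

Definition q (N m : nat) := INR (N %/ m) / INR N.

Lemma q_bound N m : (0 < m)%N -> 0 <= q N m <= / INR m.
Proof.
move=> m0; rewrite /q.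
have hm : 0 < INR m by apply: lt_0_INR; apply/ltP.
case: N => [|N]; first by rewrite div0n /= /Rdiv Rmult_0_l; split; [lra| left; apply: Rinv_0_lt_compat].
have hN : 0 < INR N.+1 by apply: lt_0_INR; lia.
have h := INR_leq (leq_divM N.+1 m); rewrite INR_muln in h.
have h0 := pos_INR (N.+1 %/ m).
split; first by apply: Rdiv_le_0_compat; lra.
apply/(Rmult_le_reg_r (INR N.+1 * INR m)); first exact: Rmult_lt_0_compat.
have -> : INR (N.+1 %/ m) / INR N.+1 * (INR N.+1 * INR m) = INR (N.+1 %/ m) * INR m by field; lra.
have -> : / INR m * (INR N.+1 * INR m) = INR N.+1 by field; lra.
lra.
Qed.

Lemma q_lim m : (0 < m)%N -> is_lim_seq (fun N => q N m) (/ INR m).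
Proof.
move=> m0.
have hm : 0 < INR m by apply: lt_0_INR; apply/ltP.
have hinv : is_lim_seq (fun N => / INR N) 0.
  have := is_lim_seq_inv _ _ is_lim_seq_INR; apply => //.
apply: (is_lim_seq_le_le_loc (fun N => / INR m - / INR N) _ (fun _ => / INR m)).
- exists 1%nat => N hN; split; last by have := q_bound N m0; lra.
  have hN' : 0 < INR N by apply: lt_0_INR; lia.
  have h := INR_leq (ltn_ceil N m0); rewrite INR_muln !S_INR in h.
  rewrite /q; apply/(Rmult_le_reg_r (INR N * INR m)); first by apply: Rmult_lt_0_compat.
  have -> : (/ INR m - / INR N) * (INR N * INR m) = INR N - INR m by field; lra.
  have -> : INR (N %/ m) / INR N * (INR N * INR m) = INR (N %/ m) * INR m by field; lra.
  lra.
- by have := is_lim_seq_minus' _ _ _ _ (is_lim_seq_const (/ INR m)) hinv; rewrite Rminus_0_r.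
- exact: is_lim_seq_const.
Qed.

Definition Rsq (n : nat) := / INR n.+1 ^ 2.

Lemma ex_series_Rsq : ex_series Rsq.
Proof.
set t := fun n : nat => / INR n.+1 - / INR n.+2.
have ht : ex_series t.
  exists 1; change (is_lim_seq (sum_n t) 1).
  apply: (is_lim_seq_ext (fun N => 1 - / INR N.+2)).
    move=> N; symmetry; elim: N => [|N IH]; first by rewrite sum_O /t /=; field; lra.
    rewrite sum_Sn IH /t /plus /=;
    ring.
  have h : is_lim_seq (fun N => / INR N.+2) 0.
    have := is_lim_seq_inv _ _ is_lim_seq_INR; move=> /(_ ltac:(done)) /= H.
    apply: (proj1 (is_lim_seq_incr_1 (fun N => / INR N.+1) 0)).
    exact: (proj1 (is_lim_seq_incr_1 (fun N => / INR N) 0)).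
  by have := is_lim_seq_minus' _ _ _ _ (is_lim_seq_const 1) h; rewrite Rminus_0_r.
apply: (ex_series_le Rsq (fun n => 2 * t n)); last first.
  by apply: (ex_series_ext (fun n => scal 2 (t n))) => //; apply: ex_series_scal_l.
move=> n; rewrite /norm /= /abs /= /Rsq /t.
have hn := pos_INR n; rewrite !S_INR.
rewrite Rabs_pos_eq; last by apply: Rlt_le; apply: Rinv_0_lt_compat; nra.
apply/(Rmult_le_reg_r ((INR n + 1) ^ 2 * (INR n + 1 + 1))); first by nra.
have -> : / (INR n + 1) ^ 2 * ((INR n + 1) ^ 2 * (INR n + 1 + 1)) = INR n + 1 + 1 by field; lra.
have -> : 2 * (/ (INR n + 1) - / (INR n + 1 + 1)) * ((INR n + 1) ^ 2 * (INR n + 1 + 1)) = 2 * (INR n + 1) by field; lra.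
lra.
Qed.

Lemma qq_bound b N m n : (0 < b)%N -> (n.+1 <= m)%N ->
  0 <= q N m * q N (m ^ b) <= Rsq n.
Proof.
move=> b0 nm.
have m0 : (0 < m)%N by apply: leq_trans nm.
have mb0 : (0 < m ^ b)%N by rewrite expn_gt0 m0.
have [q1a q1b] := q_bound N m0; have [q2a q2b] := q_bound N mb0.
have hn : 0 < INR n.+1 by apply: lt_0_INR; lia.
have h1 : INR n.+1 <= INR m by apply: INR_leq.
have h2 : INR m <= INR (m ^ b).
  apply: INR_leq; rewrite -{1}(expn1 m); exact: leq_pexp2l.
have i1 : / INR m <= / INR n.+1 by apply: Rinv_le_contravar.
have i2 : / INR (m ^ b) <= / INR n.+1 by apply: Rinv_le_contravar; lra.
split; first by nra.
have -> : Rsq n = / INR n.+1 * / INR n.+1 by rewrite /Rsq; field; lra.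
have := Rinv_0_lt_compat _ hn; nra.
Qed.

Section Main.
Variables (b : nat) (hb : (0 < b)%N).

Definition z (n : nat) := / INR n.+1 ^ (b + 1).
Definition Mu := Series (fun n => muR n.+1 * z n).

Lemma eq_bigR (I : Type) (r : seq I) (P : pred I) (F G : I -> R) :
  (forall i, P i -> F i = G i) ->
  \big[Rplus/0]_(i <- r | P i) F i = \big[Rplus/0]_(i <- r | P i) G i.
Proof. exact: eq_bigr. Qed.

Lemma big_div (I : Type) (r : seq I) (F : I -> R) c :
  (\big[Rplus/0]_(i <- r) F i) / c = \big[Rplus/0]_(i <- r) (F i / c).
Proof.
elim: r => [|x r IH]; first by rewrite !big_nil /Rdiv Rmult_0_l.
by rewrite !big_cons -IH Rdiv_plus_distr.
Qed.

Lemma big_shift (F : nat -> R) N :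
  \big[Rplus/0]_(j <- iota 1 N) F j = \big[Rplus/0]_(n <- iota 0 N) F n.+1.
Proof. by rewrite -[1%N]addn0 iotaDl big_map. Qed.

Lemma step1 k : (0 < k)%N ->
  is_lim_seq (fun N => CR b k N / INR N ^ 2) (/ INR k ^ (b + 1) * Mu).
Proof.
move=> k0.
have hk : 0 < INR k by apply: lt_0_INR; apply/ltP.
set f := fun N n => muR n.+1 * (q N (k * n.+1) * q N ((k * n.+1) ^ b)).
apply: (is_lim_seq_ext (fun N => PS (f N) N)).
  move=> N; rewrite CR_mu // big_shift /PS big_div; apply: eq_bigR => n _.
  rewrite /f /q; case: N => [|N]; first by rewrite !div0n; change (INR 0) with 0; rewrite /Rdiv !Rmult_0_l !Rmult_0_r !Rmult_0_l.
  have : 0 < INR N.+1 by apply: lt_0_INR; lia.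
  move=> hN; field; lra.
have -> : / INR k ^ (b + 1) * Mu =
    Series (fun n => muR n.+1 * (/ INR (k * n.+1) * / INR ((k * n.+1) ^ b))).
  rewrite /Mu -Series_scal_l; apply: Series_ext => n.
  rewrite /z INR_muln INR_expn INR_muln.
  have hn : 0 < INR n.+1 by apply: lt_0_INR; lia.
  rewrite !pow_add Rpow_mult_distr; field; repeat split; try apply: pow_nonzero; lra.
apply: (tannery (f := f) (M := Rsq)).
- move=> n; rewrite /f; apply: (is_lim_seq_mult' _ _ _ _ (is_lim_seq_const _)).
  apply: is_lim_seq_mult'; apply: q_lim.
    by rewrite muln_gt0 k0.
  by rewrite expn_gt0 muln_gt0 k0.
- move=> N n; rewrite /f Rabs_mult.
  have hm := muR_bound n.+1.
  have nk : (n.+1 <= k * n.+1)%N by rewrite leq_pmull.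
  have [h1 h2] := qq_bound N hb nk.
  rewrite (Rabs_pos_eq (_ * _)) //.
  have := Rabs_pos (muR n.+1); nra.
- exact: ex_series_Rsq.
Qed.

Lemma Mu_zeta : Mu * Series z = 1.
Proof.
set g := fun N n => CR b n.+1 N / INR N ^ 2.
have H := tannery (f := g) (a := fun n => Mu * z n) (M := Rsq).
rewrite -Series_scal_l.
have L : is_lim_seq (fun N => PS (g N) N) (Series (fun n => Mu * z n)).
  apply: H; last exact: ex_series_Rsq.
  - move=> n; have := step1 (ltn0Sn n); rewrite /z; have hn : 0 < INR n.+1 by apply: lt_0_INR; lia.
    have -> : / INR n.+1 ^ (b + 1) * Mu = Mu * / INR n.+1 ^ (b + 1) by ring.
    done.
  - move=> N n; rewrite /g.
    case: N => [|N]; first by rewrite /CR /= big_nil /Rdiv Rmult_0_l Rabs_R0; have := qq_bound 0 hb (leqnn n.+1); lra.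
    have hN : 0 < INR N.+1 by apply: lt_0_INR; lia.
    have c0 := CR_ge0 b n.+1 N.+1.
    have c1 := CR_le b N.+1 (ltn0Sn n).
    have [_ h2] := qq_bound N.+1 hb (leqnn n.+1).
    rewrite Rabs_pos_eq; last by apply: Rdiv_le_0_compat => //; apply: pow_lt.
    apply: Rle_trans h2; rewrite /q.
    have -> : INR (N.+1 %/ n.+1) / INR N.+1 * (INR (N.+1 %/ n.+1 ^ b) / INR N.+1) =
       INR (N.+1 %/ n.+1) * INR (N.+1 %/ n.+1 ^ b) / INR N.+1 ^ 2 by field; lra.
    apply: Rmult_le_compat_r => //; apply: Rlt_le; apply: Rinv_0_lt_compat; apply: pow_lt => //.
have L1 : is_lim_seq (fun N => PS (g N) N) 1.
  apply: (is_lim_seq_ext_loc (fun _ => 1)); last exact: is_lim_seq_const.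
  exists 1%nat => N hN.
  have hN' : 0 < INR N by apply: lt_0_INR; lia.
  rewrite /PS /g -big_distrl /= -(big_shift (fun k => CR b k N)) CR_total; field; lra.
have := is_lim_seq_unique _ _ L; rewrite (is_lim_seq_unique _ _ L1).
by case.
Qed.

End Main.

Theorem mainTheorem2 (b k : nat) (hb : lt 0 b) (hk : lt 0 k) :
  is_lim_seq
    (fun N : nat => INR (count_gcd_b b k N) / (INR N) ^ 2)
    (1 / ((INR k) ^ (b + 1) * zeta (INR (b + 1)))).
Proof.
have hb' : (0 < b)%N by apply/ltP.
have hk' : (0 < k)%N by apply/ltP.
have Z : zeta (INR (b + 1)) = Series (z b).
  rewrite /zeta; apply: Series_ext => n; rewrite /z Rpower_pow //; apply: lt_0_INR; lia.
have hkr : 0 < INR k by apply: lt_0_INR.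
have MZ := Mu_zeta hb'.
have -> : 1 / (INR k ^ (b + 1) * zeta (INR (b + 1))) = / INR k ^ (b + 1) * Mu b.
  have S0 : Series (z b) <> 0 by move=> h; rewrite h Rmult_0_r in MZ; lra.
  have -> : Mu b = / Series (z b).
    apply: (Rmult_eq_reg_r (Series (z b))) => //; rewrite MZ Rinv_l //.
  rewrite Z; field; split => //; apply: pow_nonzero; lra.
apply: (is_lim_seq_ext (fun N => CR b k N / INR N ^ 2)); last exact: step1.
by move=> N; rewrite count_CR.
Qed.
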